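(* Let $(\mathcal H,\mathfrak A_0)$ be a Hilbert quasi *-algebra admitting a norm-continuous module function $\mu$ with $\mu(\mathfrak A_0)\subseteq\mathfrak A_0^+$. Then every w-positive element is the limit of a sequence of elements of $\mathfrak A_0^+$; i.e. $\mathcal H^+=\mathcal H^+_w$.
   Context: A Hilbert algebra is a *-algebra $\mathfrak A_0$ with an inner product $\langle\cdot,\cdot\rangle$ such that (i) for each $x$, $y\mapsto xy$ is continuous for the inner product norm; (ii) $\langle xy,z\rangle=\langle y,x^*z\rangle$ for all $x,y,z$; (iii) $\langle x,y\rangle=\langle y^*,x^*\rangle$ for all $x,y$; (iv) the linear span of $\{xy:x,y\in\mathfrak A_0\}$ is dense in $\mathfrak A_0$. Let $\mathcal H$ be the Hilbert space completion of $\mathfrak A_0$; the involution extends isometrically to $\mathcal H$, and the products $\xi x$, $x\xi$ for $\xi\in\mathcal H$, $x\in\mathfrak A_0$ are defined by continuity. It is assumed that (A): if $\xi\in\mathcal H$ and $\xi x=0$ for all $x\in\mathfrak A_0$ then $\xi=0$. With these operations $(\mathcal H,\mathfrak A_0)$ is called a Hilbert quasi *-algebra. $\mathfrak A_0^+=\{\sum_{k=1}^n x_k^*x_k: x_k\in\mathfrak A_0,n\in\mathbb N\}$, $\mathcal H^+$ is its norm closure in $\mathcal H$, and $\mathcal H^+_w=\{\xi\in\mathcal H:\langle\xi x,x\rangle\ge0\ \forall x\in\mathfrak A_0\}$ (w-positive elements). A module function is a map $\mu:\mathcal H\to\mathcal H$ with (i) $\mu(\xi)\in\mathcal H^+_w$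 for all $\xi$; (ii) $\mu(\xi)=\xi$ for all $\xi\in\mathcal H^+_w$; (iii) $\|\mu(\xi)\|=\|\xi\|$ for all $\xi$. *)

(* Defs.v *)
From Stdlib Require Import Reals List.
Open Scope R_scope.

Record Cx := mkC { Re : R; Im : R }.
Definition Cadd (a b : Cx) : Cx := mkC (Re a + Re b) (Im a + Im b).
Definition Cmul (a b : Cx) : Cx :=
  mkC (Re a * Re b - Im a * Im b) (Re a * Im b + Im a * Re b).
Definition Cconj (a : Cx) : Cx := mkC (Re a) (- Im a).
Definition C0 : Cx := mkC 0 0.
Definition C1 : Cx := mkC 1 0.
Definition Cnonneg (z : Cx) : Prop := Im z = 0 /\ 0 <= Re z.

(** A Hilbert quasi *-algebra (H, A0): H is a complex Hilbert space (the
    completion of A0, i.e. A0 is a dense subspace carrying the induced inner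
    product), A0 is a *-algebra satisfying (i)-(iv), the products
    xi x, x xi (xi in H, x in A0) are the continuous extensions, the
    involution extends isometrically, and condition (A) holds. *)
Record HQA := {
  H :> Type;
  hadd : H -> H -> H;
  hzero : H;
  hopp : H -> H;
  hscal : Cx -> H -> H;
  hadd_assoc : forall x y z, hadd x (hadd y z) = hadd (hadd x y) z;
  hadd_comm : forall x y, hadd x y = hadd y x;
  hadd_0 : forall x, hadd hzero x = x;
  hadd_opp : forall x, hadd x (hopp x) = hzero;
  hscal_1 : forall x, hscal C1 x = x;
  hscal_assoc : forall a b x, hscal a (hscal b x) = hscal (Cmul a b) x;
  hscal_addl : forall a b x, hscal (Cadd a b) x = hadd (hscal a x) (hscal b x);
  hscal_addr : forall a x y, hscal a (hadd x y) = hadd (hscal a x) (hscal a y);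
  ip : H -> H -> Cx;
  ip_add : forall x y z, ip (hadd x y) z = Cadd (ip x z) (ip y z);
  ip_scal : forall a x z, ip (hscal a x) z = Cmul a (ip x z);
  ip_sym : forall x y, ip y x = Cconj (ip x y);
  ip_pos : forall x, Cnonneg (ip x x);
  ip_def : forall x, ip x x = C0 -> x = hzero;
  h_complete : forall u : nat -> H,
    (forall eps, 0 < eps -> exists N, forall m n, (N <= m)%nat -> (N <= n)%nat ->
        sqrt (Re (ip (hadd (u m) (hopp (u n))) (hadd (u m) (hopp (u n))))) < eps) ->
    exists l, forall eps, 0 < eps -> exists N, forall n, (N <= n)%nat ->
        sqrt (Re (ip (hadd (u n) (hopp l)) (hadd (u n) (hopp l)))) < eps;
  A0 : H -> Prop;
  A0_zero : A0 hzero;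
  A0_add : forall x y, A0 x -> A0 y -> A0 (hadd x y);
  A0_scal : forall a x, A0 x -> A0 (hscal a x);
  A0_dense : forall xi eps, 0 < eps -> exists x, A0 x /\
      sqrt (Re (ip (hadd xi (hopp x)) (hadd xi (hopp x)))) < eps;
  (* multiplication (meaningful when at least one factor is in A0) *)
  mul : H -> H -> H;
  A0_mul : forall x y, A0 x -> A0 y -> A0 (mul x y);
  mul_assoc : forall x y z, A0 x -> A0 y -> A0 z -> mul x (mul y z) = mul (mul x y) z;
  mul_addl : forall xi eta x, A0 x -> mul (hadd xi eta) x = hadd (mul xi x) (mul eta x);
  mul_scall : forall a xi x, A0 x -> mul (hscal a xi) x = hscal a (mul xi x);
  mul_addr : forall x xi eta, A0 x -> mul x (hadd xi eta) = hadd (mul x xi) (mul x eta);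
  mul_scalr : forall a x xi, A0 x -> mul x (hscal a xi) = hscal a (mul x xi);
  mul_addr' : forall xi x y, A0 x -> A0 y -> mul xi (hadd x y) = hadd (mul xi x) (mul xi y);
  mul_scalr' : forall a xi x, A0 x -> mul xi (hscal a x) = hscal a (mul xi x);
  mul_addl' : forall x y xi, A0 x -> A0 y -> mul (hadd x y) xi = hadd (mul x xi) (mul y xi);
  mul_scall' : forall a x xi, A0 x -> mul (hscal a x) xi = hscal a (mul x xi);
  (* (i) and the extension by continuity: for x in A0, xi |-> x xi and
     xi |-> xi x are bounded (hence continuous) on H *)
  mul_bounded_l : forall x, A0 x -> exists c, forall xi,
      sqrt (Re (ip (mul x xi) (mul x xi))) <= c * sqrt (Re (ip xi xi));
  mul_bounded_r : forall x, A0 x -> exists c, forall xi,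
      sqrt (Re (ip (mul xi x) (mul xi x))) <= c * sqrt (Re (ip xi xi));
  inv : H -> H;
  A0_inv : forall x, A0 x -> A0 (inv x);
  inv_inv : forall xi, inv (inv xi) = xi;
  inv_add : forall xi eta, inv (hadd xi eta) = hadd (inv xi) (inv eta);
  inv_scal : forall a xi, inv (hscal a xi) = hscal (Cconj a) (inv xi);
  inv_isom : forall xi, Re (ip (inv xi) (inv xi)) = Re (ip xi xi);
  inv_mul : forall x y, A0 x -> A0 y -> inv (mul x y) = mul (inv y) (inv x);
  ip_mul : forall x y z, A0 x -> A0 y -> A0 z -> ip (mul x y) z = ip y (mul (inv x) z);
  ip_inv : forall x y, A0 x -> A0 y -> ip x y = ip (inv y) (inv x);
  A0_products_dense : forall x eps, A0 x -> 0 < eps ->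
    exists l : list (H * H), (forall p, In p l -> A0 (fst p) /\ A0 (snd p)) /\
      let s := fold_right hadd hzero (map (fun p => mul (fst p) (snd p)) l) in
      sqrt (Re (ip (hadd x (hopp s)) (hadd x (hopp s)))) < eps;
  cond_A : forall xi, (forall x, A0 x -> mul xi x = hzero) -> xi = hzero
}.

Section Notions.
Variable HA : HQA.

Definition hnorm (xi : H HA) : R := sqrt (Re (ip HA xi xi)).
Definition hsub (xi eta : H HA) : H HA := hadd HA xi (hopp HA eta).

Definition A0plus (xi : H HA) : Prop :=
  exists l : list (H HA), (forall x, In x l -> A0 HA x) /\
    xi = fold_right (hadd HA) (hzero HA) (map (fun x => mul HA (inv HA x) x) l).

Definition Hplus (xi : H HA) : Prop :=
  exists u : nat -> H HA, (forall n, A0plus (u n)) /\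
    forall eps, 0 < eps -> exists N, forall n, (N <= n)%nat -> hnorm (hsub (u n) xi) < eps.

Definition Hwplus (xi : H HA) : Prop :=
  forall x, A0 HA x -> Cnonneg (ip HA (mul HA xi x) x).

Definition module_function (mu : H HA -> H HA) : Prop :=
  (forall xi, Hwplus (mu xi)) /\
  (forall xi, Hwplus xi -> mu xi = xi) /\
  (forall xi, hnorm (mu xi) = hnorm xi).

Definition norm_continuous (f : H HA -> H HA) : Prop :=
  forall xi eps, 0 < eps -> exists delta, 0 < delta /\
    forall eta, hnorm (hsub eta xi) < delta -> hnorm (hsub (f eta) (f xi)) < eps.

End Notions.

(* Main.v *)
Require Import Defs.
From Stdlib Require Import Reals List.
From Stdlib Require Import Lra Lia IndefiniteDescription.

Lemma Cx_eq (a b : Cx) : Re a = Re b -> Im a = Im b -> a = b.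
Proof. destruct a, b; simpl; intros; subst; reflexivity. Qed.

Definition m1 : Cx := mkC (-1) 0.

Lemma hadd_0r (HA : HQA) (x : H HA) : hadd HA x (hzero HA) = x.
Proof. rewrite hadd_comm, hadd_0; reflexivity. Qed.

Lemma idem0 (HA : HQA) (y : H HA) : hadd HA y y = y -> y = hzero HA.
Proof.
  intros Hy.
  transitivity (hadd HA (hadd HA y y) (hopp HA y)).
  { rewrite <- hadd_assoc, hadd_opp, hadd_0r. reflexivity. }
  rewrite Hy, hadd_opp. reflexivity.
Qed.

Lemma hscal_C0 (HA : HQA) (x : H HA) : hscal HA Defs.C0 x = hzero HA.
Proof.
  apply idem0. rewrite <- hscal_addl. f_equal. apply Cx_eq; simpl; ring.
Qed.

Lemma opp_unique (HA : HQA) (x y : H HA) : hadd HA x y = hzero HA -> y = hopp HA x.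
Proof.
  intros Hxy.
  transitivity (hadd HA (hadd HA (hopp HA x) x) y).
  { rewrite (hadd_comm HA (hopp HA x) x), hadd_opp, hadd_0; reflexivity. }
  rewrite <- hadd_assoc, Hxy, hadd_0r. reflexivity.
Qed.

Lemma hopp_scal (HA : HQA) (x : H HA) : hopp HA x = hscal HA m1 x.
Proof.
  symmetry; apply opp_unique.
  rewrite <- (hscal_1 HA x) at 1. rewrite <- hscal_addl.
  replace (Cadd Defs.C1 m1) with Defs.C0 by (apply Cx_eq; simpl; ring).
  apply hscal_C0.
Qed.

Lemma m1m1 : Cmul m1 m1 = Defs.C1.
Proof. apply Cx_eq; simpl; ring. Qed.

Lemma nsq_neg (HA : HQA) (z : H HA) :
  Re (ip HA (hscal HA m1 z) (hscal HA m1 z)) = Re (ip HA z z).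
Proof.
  rewrite ip_scal, ip_sym, ip_scal.
  destruct (ip HA z z); simpl; ring.
Qed.

Lemma ip_negr (HA : HQA) (a b : H HA) :
  Re (ip HA a (hscal HA m1 b)) = - Re (ip HA a b).
Proof.
  rewrite ip_sym, ip_scal, (ip_sym HA a b).
  destruct (ip HA a b); simpl; ring.
Qed.

Lemma ip_negl (HA : HQA) (a b : H HA) :
  Re (ip HA (hscal HA m1 b) a) = - Re (ip HA b a).
Proof.
  rewrite ip_scal. destruct (ip HA b a); simpl; ring.
Qed.

Lemma expand (HA : HQA) (a b : H HA) :
  Re (ip HA (hadd HA a b) (hadd HA a b)) =
  Re (ip HA a a) + Re (ip HA b b) + Re (ip HA a b) + Re (ip HA b a).
Proof.
  rewrite ip_add, (ip_sym HA (hadd HA a b) a), (ip_sym HA (hadd HA a b) b), !ip_add.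
  destruct (ip HA a a), (ip HA b a), (ip HA a b), (ip HA b b); simpl; ring.
Qed.

Lemma nsq_nonneg (HA : HQA) (z : H HA) : 0 <= Re (ip HA z z).
Proof. apply (ip_pos HA z). Qed.

Lemma nsq_add (HA : HQA) (a b : H HA) :
  Re (ip HA (hadd HA a b) (hadd HA a b)) <= 2 * (Re (ip HA a a) + Re (ip HA b b)).
Proof.
  pose proof (nsq_nonneg HA (hadd HA a (hscal HA m1 b))) as P.
  rewrite expand, nsq_neg, ip_negr, ip_negl in P.
  rewrite expand. lra.
Qed.

Lemma hsub_sym (HA : HQA) (a b : H HA) :
  hsub HA b a = hscal HA m1 (hsub HA a b).
Proof.
  unfold hsub. rewrite hscal_addr.
  rewrite (hopp_scal HA b), hscal_assoc, m1m1, hscal_1.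
  rewrite (hopp_scal HA a). apply hadd_comm.
Qed.

Lemma hnorm_sym (HA : HQA) (a b : H HA) :
  hnorm HA (hsub HA a b) = hnorm HA (hsub HA b a).
Proof.
  unfold hnorm. f_equal. rewrite (hsub_sym HA a b), nsq_neg. reflexivity.
Qed.

Lemma hnorm_lt (HA : HQA) (z : H HA) (e : R) :
  hnorm HA z < e -> Re (ip HA z z) < e * e.
Proof.
  unfold hnorm. intros Hl.
  pose proof (nsq_nonneg HA z) as Hnn.
  pose proof (sqrt_sqrt _ Hnn). pose proof (sqrt_pos (Re (ip HA z z))).
  nra.
Qed.

Lemma mul_zero_l (HA : HQA) (x : H HA) : A0 HA x -> mul HA (hzero HA) x = hzero HA.
Proof.
  intros Hx. apply idem0. rewrite <- mul_addl by exact Hx. rewrite hadd_0. reflexivity.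
Qed.

Lemma ip_zero_l (HA : HQA) (z : H HA) : ip HA (hzero HA) z = Defs.C0.
Proof.
  assert (E : ip HA (hzero HA) z = Cadd (ip HA (hzero HA) z) (ip HA (hzero HA) z))
    by (rewrite <- ip_add, hadd_0; reflexivity).
  revert E. generalize (ip HA (hzero HA) z). intros [r i] E.
  unfold Cadd in E; simpl in E. injection E; intros.
  apply Cx_eq; simpl; lra.
Qed.

Lemma Cnonneg_add (a b : Cx) : Cnonneg a -> Cnonneg b -> Cnonneg (Cadd a b).
Proof. unfold Cnonneg, Cadd; simpl; intros [] []; split; lra. Qed.

Lemma A0plus_w (HA : HQA) (u : H HA) : A0plus HA u -> Hwplus HA u.
Proof.
  intros [l [Hl ->]] x Hx.
  induction l as [|y l IH]; simpl.
  - rewrite mul_zero_l by exact Hx. rewrite ip_zero_l. split; simpl; lra.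
  - assert (Hy : A0 HA y) by (apply Hl; left; reflexivity).
    rewrite mul_addl by exact Hx. rewrite ip_add.
    apply Cnonneg_add.
    + rewrite <- mul_assoc by (auto using A0_inv).
      rewrite ip_mul by (auto using A0_inv, A0_mul).
      rewrite inv_inv. apply ip_pos.
    + apply IH. intros z Hz; apply Hl; right; exact Hz.
Qed.

Theorem mainTheorem17 (HA : HQA) (mu : H HA -> H HA)
  (Hmu : module_function HA mu) (Hcont : norm_continuous HA mu)
  (HmuA0 : forall x, A0 HA x -> A0plus HA (mu x)) :
  forall xi : H HA, Hplus HA xi <-> Hwplus HA xi.
Proof.
  destruct Hmu as [Hm1 [Hm2 Hm3]].
  intros xi; split.
  - intros [u [Hu Hconv]].
    assert (Hwu : forall n, Hwplus HA (u n)) by (intro n; apply A0plus_w, Hu).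
    set (d := hsub HA xi (mu xi)).
    assert (Hd : forall e, 0 < e -> e <= 1 -> Re (ip HA d d) <= 4 * e).
    { intros e He He1.
      destruct (Hcont xi e He) as [delta [Hdel Hc]].
      destruct (Hconv (Rmin delta e)) as [N HN].
      { apply Rmin_pos; assumption. }
      specialize (HN N (le_n N)).
      assert (h1 : hnorm HA (hsub HA (u N) xi) < delta)
        by (eapply Rlt_le_trans; [exact HN | apply Rmin_l]).
      assert (h1' : hnorm HA (hsub HA (u N) xi) < e)
        by (eapply Rlt_le_trans; [exact HN | apply Rmin_r]).
      specialize (Hc _ h1). rewrite (Hm2 _ (Hwu N)) in Hc.
      assert (Edec : d = hadd HA (hsub HA xi (u N)) (hsub HA (u N) (mu xi))).
      { unfold d, hsub.
        rewrite <- hadd_assoc, (hadd_assoc HA (hopp HA (u N))).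
        rewrite (hadd_comm HA (hopp HA (u N)) (u N)), hadd_opp, hadd_0. reflexivity. }
      rewrite Edec.
      eapply Rle_trans; [apply nsq_add|].
      rewrite hnorm_sym in h1'.
      apply hnorm_lt in h1'. apply hnorm_lt in Hc.
      nra. }
    assert (Hd0 : Re (ip HA d d) <= 0).
    { destruct (Rle_dec (Re (ip HA d d)) 0) as [|Hn]; [assumption|].
      exfalso. set (r := Re (ip HA d d)) in *.
      assert (0 < r) by lra.
      specialize (Hd (Rmin 1 (r/8))).
      assert (Rmin 1 (r/8) <= r/8) by apply Rmin_r.
      assert (0 < Rmin 1 (r/8)) by (apply Rmin_pos; lra).
      specialize (Hd H1 (Rmin_l _ _)). lra. }
    assert (Hdz : d = hzero HA).
    { apply ip_def. destruct (ip_pos HA d) as [Him Hre].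
      apply Cx_eq; simpl; lra. }
    assert (Exi : xi = mu xi).
    { transitivity (hadd HA xi (hadd HA (hopp HA (mu xi)) (mu xi))).
      { rewrite (hadd_comm HA (hopp HA (mu xi))), hadd_opp, hadd_0r. reflexivity. }
      rewrite hadd_assoc. change (hadd HA xi (hopp HA (mu xi))) with d.
      rewrite Hdz, hadd_0. reflexivity. }
    rewrite Exi. apply Hm1.
  - intros Hw.
    assert (X : forall n : nat, {x | A0 HA x /\ hnorm HA (hsub HA xi x) < / INR (S n)}).
    { intro n. apply constructive_indefinite_description.
      apply A0_dense. apply Rinv_0_lt_compat, lt_0_INR; lia. }
    exists (fun n => mu (proj1_sig (X n))). split.
    + intro n. apply HmuA0. exact (proj1 (proj2_sig (X n))).
    + intros eps Heps.
      destruct (Hcont xi eps Heps) as [delta [Hdel Hc]].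
      destruct (archimed_cor1 delta Hdel) as [N [HN HN0]].
      exists N. intros n Hn.
      replace (hsub HA (mu (proj1_sig (X n))) xi)
        with (hsub HA (mu (proj1_sig (X n))) (mu xi)) by (rewrite (Hm2 xi Hw); reflexivity).
      apply Hc.
      destruct (proj2_sig (X n)) as [_ Hx].
      rewrite hnorm_sym.
      eapply Rlt_le_trans; [exact Hx|].
      apply Rlt_le. eapply Rle_lt_trans; [|exact HN].
      apply Rinv_le_contravar.
      * apply lt_0_INR; lia.
      * apply le_INR; lia.
Qed.
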